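(* Every quasi-semi-simple group $(G,\tau)$ is topologically minimal: if $\tau'$ is a Hausdorff topology on $G$ making $G$ a topological group and $\tau'\subseteq\tau$, then $\tau'=\tau$.
   Context: A locally compact group $G$ is quasi-semi-simple (qss) if there is a closed subgroup $A<G$ such that (i) $G=CAC$ for some compact $C\subset G$; (ii) for every net $(a_\alpha)$ in $A$ converging to infinity there is a subnet $(a_\beta)$ such that $U^{(a_\beta)}_+$ is not precompact and the subgroup generated by $U^{(a_\beta)}_+,U^{(a_\beta)}_-,U^{(a_\beta)}_0$ is dense in $G$, where for a net $(g_\alpha)$: $U^{(g_\alpha)}_+=\{x: g_\alpha^{-1}xg_\alpha\to e\}$, $U^{(g_\alpha)}_-=\{x: g_\alpha xg_\alpha^{-1}\to e\}$, and $U^{(g_\alpha)}_0$ is the set of $x$ such that every subnet of each of the nets $(g_\alpha^{-1}xg_\alpha)$, $(g_\alpha xg_\alpha^{-1})$ admits a converging subnet. *)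

(* Defs.v *)
From Stdlib Require Import List.

Set Implicit Arguments.

Record GroupOn (G : Type) := {
  gmul : G -> G -> G;
  ginv : G -> G;
  gone : G;
  gmul_assoc : forall x y z, gmul x (gmul y z) = gmul (gmul x y) z;
  gmul_1l : forall x, gmul gone x = x;
  gmul_1r : forall x, gmul x gone = x;
  gmul_Vl : forall x, gmul (ginv x) x = gone;
  gmul_Vr : forall x, gmul x (ginv x) = gone
}.

Record directed := {
  dT :> Type;
  dle : dT -> dT -> Prop;
  dle_refl : forall a, dle a a;
  dle_trans : forall a b c, dle a b -> dle b c -> dle a c;
  dle_dir : forall a b, exists c, dle a c /\ dle b c;
  d_inhab : dT
}.

Definition eventually (D : directed) (P : D -> Prop) : Prop :=
  exists a0 : D, forall a : D, dle D a0 a -> P a.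

(* (E, h) defines a subnet of any net indexed by D: h is cofinal
   (Willard's notion: for every d, eventually h e >= d). The subnet of x is x \o h. *)
Definition is_subnet (D E : directed) (h : E -> D) : Prop :=
  forall d : D, eventually E (fun e => dle D d (h e)).

Section Topology.
Context {G : Type} (tau : (G -> Prop) -> Prop).

Definition is_topology : Prop :=
  tau (fun _ => True) /\
  (forall (I : Type) (U : I -> G -> Prop),
      (forall i, tau (U i)) -> tau (fun x => exists i, U i x)) /\
  (forall U V, tau U -> tau V -> tau (fun x => U x /\ V x)).

Definition hausdorff : Prop :=
  forall x y : G, x <> y -> exists U V, tau U /\ tau V /\ U x /\ V y /\
    (forall z, U z -> V z -> False).

Definition compact (K : G -> Prop) : Prop :=
  forall (I : Type) (U : I -> G -> Prop),
    (forall i, tau (U i)) -> (forall x, K x -> exists i, U i x) ->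
    exists l : list I, forall x, K x -> exists i, In i l /\ U i x.

Definition closure (S : G -> Prop) : G -> Prop :=
  fun x => forall U, tau U -> U x -> exists y, U y /\ S y.

Definition closed (S : G -> Prop) : Prop := tau (fun x => ~ S x).

Definition precompact (S : G -> Prop) : Prop := compact (closure S).

Definition dense (S : G -> Prop) : Prop := forall x, closure S x.

Definition locally_compact : Prop :=
  forall x : G, exists U K, tau U /\ U x /\ compact K /\ (forall y, U y -> K y).

Definition converges {D : directed} (x : D -> G) (l : G) : Prop :=
  forall U, tau U -> U l -> eventually D (fun a => U (x a)).

Definition to_infinity {D : directed} (x : D -> G) : Prop :=
  forall K, compact K -> eventually D (fun a => ~ K (x a)).

Definition every_subnet_has_conv_subnet {D : directed} (x : D -> G) : Prop :=
  forall (E : directed) (h : E -> D), is_subnet D E h ->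
    exists (F : directed) (k : F -> E) (l : G),
      is_subnet E F k /\ converges (D := F) (fun f => x (h (k f))) l.

End Topology.

Section Groups.
Context {G : Type} (Gr : GroupOn G) (tau : (G -> Prop) -> Prop).

Local Notation "x * y" := (gmul Gr x y).
Local Notation "x ^-1" := (ginv Gr x) (at level 3).
Local Notation e := (gone Gr).

Definition is_topological_group : Prop :=
  is_topology tau /\
  (forall U, tau U -> forall x y, U (x * y) ->
     exists A B, tau A /\ tau B /\ A x /\ B y /\
       (forall a b, A a -> B b -> U (a * b))) /\
  (forall U, tau U -> tau (fun x => U (x ^-1))).

Definition is_subgroup (H : G -> Prop) : Prop :=
  H e /\ (forall x y, H x -> H y -> H (x * y)) /\ (forall x, H x -> H (x ^-1)).

Definition generated (S : G -> Prop) : G -> Prop :=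
  fun x => forall H, is_subgroup H -> (forall y, S y -> H y) -> H x.

Definition Uplus {D : directed} (g : D -> G) : G -> Prop :=
  fun x => converges tau (fun a => (g a)^-1 * x * g a) e.
Definition Uminus {D : directed} (g : D -> G) : G -> Prop :=
  fun x => converges tau (fun a => g a * x * (g a)^-1) e.
Definition Uzero {D : directed} (g : D -> G) : G -> Prop :=
  fun x => every_subnet_has_conv_subnet tau (fun a => (g a)^-1 * x * g a) /\
           every_subnet_has_conv_subnet tau (fun a => g a * x * (g a)^-1).

Definition quasi_semi_simple : Prop :=
  exists (A : G -> Prop) (C : G -> Prop),
    is_subgroup A /\ closed tau A /\ compact tau C /\
    (forall g, exists c1 a c2, C c1 /\ A a /\ C c2 /\ g = c1 * a * c2) /\
    (forall (D : directed) (a : D -> G), (forall i, A (a i)) ->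
       to_infinity tau a ->
       exists (E : directed) (h : E -> D),
         is_subnet D E h /\
         ~ precompact tau (Uplus (fun b => a (h b))) /\
         dense tau (generated (fun x => Uplus (fun b => a (h b)) x \/
                                        Uminus (fun b => a (h b)) x \/
                                        Uzero (fun b => a (h b)) x))).

End Groups.

(* Main.v *)
Require Import Defs.
From Stdlib Require Import List Classical ClassicalEpsilon FunctionalExtensionality PropExtensionality.

Section Gen.
Context {G : Type}.

Lemma conv_subnet (tau : (G->Prop)->Prop) (D E : directed) (x : D -> G) (h : E -> D) l :
  converges tau x l -> is_subnet D E h -> converges tau (fun e => x (h e)) l.
Proof.
  intros Hc Hs U HU Ul. destruct (Hc U HU Ul) as [a0 Ha0].
  destruct (Hs a0) as [e0 He0]. exists e0. intros e He. apply Ha0, He0, He.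
Qed.

Lemma subnet_comp (D E F : directed) (h : E -> D) (k : F -> E) :
  is_subnet D E h -> is_subnet E F k -> is_subnet D F (fun f => h (k f)).
Proof.
  intros Hh Hk d. destruct (Hh d) as [e0 He0]. destruct (Hk e0) as [f0 Hf0].
  exists f0. intros f Hf. apply He0, Hf0, Hf.
Qed.

Lemma conv_coarser (tau tau' : (G->Prop)->Prop) (D : directed) (x : D -> G) l :
  (forall U, tau' U -> tau U) -> converges tau x l -> converges tau' x l.
Proof. intros Hsub Hc U HU Ul. apply Hc; auto. Qed.

Lemma conv_ext (tau : (G->Prop)->Prop) (D : directed) (x z : D -> G) l :
  (forall d, x d = z d) -> converges tau x l -> converges tau z l.
Proof.
  intros Hxz Hc U HU Ul. destruct (Hc U HU Ul) as [a0 Ha0]. exists a0.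
  intros a Ha. rewrite <- Hxz. apply Ha0, Ha.
Qed.

Lemma conv_const (tau : (G->Prop)->Prop) (D : directed) (c : G) :
  converges tau (fun _ : D => c) c.
Proof. intros U HU Uc. exists (d_inhab D). intros; exact Uc. Qed.

Lemma ev_and (D : directed) (P Q : D -> Prop) :
  eventually D P -> eventually D Q -> eventually D (fun a => P a /\ Q a).
Proof.
  intros [a Ha] [b Hb]. destruct (dle_dir D a b) as [c [Hac Hbc]].
  exists c. intros d Hd. split; [apply Ha | apply Hb]; eapply dle_trans; eauto.
Qed.

Lemma ev_some (D : directed) (P : D -> Prop) : eventually D P -> exists a, P a.
Proof. intros [a Ha]. exists a. apply Ha, dle_refl. Qed.

Lemma conv_unique (tau : (G->Prop)->Prop) (D : directed) (x : D -> G) l1 l2 :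
  hausdorff tau -> converges tau x l1 -> converges tau x l2 -> l1 = l2.
Proof.
  intros Hh H1 H2. apply NNPP; intro Hne.
  destruct (Hh _ _ Hne) as [U [V [HU [HV [Ul [Vl Hd]]]]]].
  destruct (ev_some _ _ (ev_and _ _ _ (H1 U HU Ul) (H2 V HV Vl))) as [a [Ha Hb]].
  exact (Hd _ Ha Hb).
Qed.

Lemma compact_freq_subnet (tau : (G->Prop)->Prop) (K : G -> Prop) (D : directed) (x : D -> G) :
  is_topology tau -> compact tau K ->
  (forall d, exists d', dle D d d' /\ K (x d')) ->
  exists (F : directed) (k : F -> D) (l : G),
    is_subnet D F k /\ converges tau (fun f => x (k f)) l.
Proof.
  intros Htop Hc Hfreq.
  assert (Hcl : exists p, forall V, tau V -> V p -> forall d, exists d', dle D d d' /\ V (x d')).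
  { apply NNPP; intro Hno.
    set (I := {V : G -> Prop | tau V /\ exists d, forall d', dle D d d' -> ~ V (x d')}).
    destruct (Hc I (fun i => proj1_sig i) (fun i => proj1 (proj2_sig i))) as [l Hl].
    - intros p Kp. apply NNPP; intro Hn. apply Hno. exists p. intros V HV Vp d.
      apply NNPP; intro Hd. apply Hn.
      exists (exist _ V (conj HV (ex_intro _ d (fun d' Hdd' HVx => Hd (ex_intro _ d' (conj Hdd' HVx)))))).
      exact Vp.
    - assert (Hbig : forall l : list I, exists d, forall i, In i l -> forall d', dle D d d' -> ~ proj1_sig i (x d')).
      { induction l0 as [|a l0 IH].
        - exists (d_inhab D). intros i [].
        - destruct IH as [d1 Hd1]. destruct (proj2 (proj2_sig a)) as [d2 Hd2].
          destruct (dle_dir D d1 d2) as [d3 [H13 H23]]. exists d3.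
          intros i [<-|Hi] d' Hd'.
          + apply Hd2. eapply dle_trans; eauto.
          + apply Hd1; auto. eapply dle_trans; eauto. }
      destruct (Hbig l) as [d Hd]. destruct (Hfreq d) as [d' [Hdd' Kd']].
      destruct (Hl _ Kd') as [i [Hi Ui]]. exact (Hd i Hi d' Hdd' Ui). }
  destruct Hcl as [p Hp].
  destruct Htop as [HT [_ HI]].
  set (FT := {q : D * (G -> Prop) | tau (snd q) /\ snd q p /\ snd q (x (fst q))}).
  set (Fle := fun q1 q2 : FT => dle D (fst (proj1_sig q1)) (fst (proj1_sig q2)) /\
                 forall z, snd (proj1_sig q2) z -> snd (proj1_sig q1) z).
  assert (Hrefl : forall q, Fle q q).
  { intro q. split; [apply dle_refl | auto]. }
  assert (Htrans : forall a b c, Fle a b -> Fle b c -> Fle a c).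
  { intros a b c [Hab1 Hab2] [Hbc1 Hbc2]. split; [eapply dle_trans; eauto | auto]. }
  assert (Hdir : forall a b, exists c, Fle a c /\ Fle b c).
  { intros [[d1 V1] [HV1 [V1p V1x]]] [[d2 V2] [HV2 [V2p V2x]]].
    destruct (dle_dir D d1 d2) as [d3 [H13 H23]].
    set (W := fun z => V1 z /\ V2 z).
    assert (HW : tau W) by (apply HI; auto).
    destruct (Hp W HW (conj V1p V2p) d3) as [d' [H3' Wx]].
    exists (exist _ (d', W) (conj HW (conj (conj V1p V2p) Wx))).
    split; split; simpl; try (eapply dle_trans; eauto); intros z [Hz1 Hz2]; auto. }
  assert (q0 : FT).
  { exists (d_inhab D, fun _ => True). simpl. auto. }
  exists (@Build_directed FT Fle Hrefl Htrans Hdir q0).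
  exists (fun q => fst (proj1_sig q)). exists p. split.
  - intro d. exists (exist _ (d, fun _ => True) (conj HT (conj I I)) : FT).
    intros q [Hq1 _]. exact Hq1.
  - intros U HU Up. destruct (Hp U HU Up (d_inhab D)) as [d' [_ Ux]].
    exists (exist _ (d', U) (conj HU (conj Up Ux)) : FT).
    intros [[dq Vq] [HVq [Vqp Vqx]]] [_ Hsub]. simpl in *. apply Hsub. exact Vqx.
Qed.

End Gen.

Section Grp.
Context {G : Type} (Gr : GroupOn G).
Local Notation "x * y" := (gmul Gr x y).
Local Notation "x ^-1" := (ginv Gr x) (at level 3).
Local Notation e := (gone Gr).

Lemma conv_mul tau (D : directed) (x y : D -> G) p q :
  is_topological_group Gr tau -> converges tau x p -> converges tau y q ->
  converges tau (fun d => x d * y d) (p * q).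
Proof.
  intros [_ [Hm _]] Hx Hy U HU Upq.
  destruct (Hm U HU p q Upq) as [A [B [HA [HB [Ap [Bq HAB]]]]]].
  destruct (ev_and _ _ _ (Hx A HA Ap) (Hy B HB Bq)) as [a0 Ha0].
  exists a0. intros a Ha. destruct (Ha0 a Ha). auto.
Qed.

Lemma conv_inv tau (D : directed) (x : D -> G) p :
  is_topological_group Gr tau -> converges tau x p -> converges tau (fun d => (x d)^-1) (p^-1).
Proof.
  intros [_ [_ Hi]] Hx U HU Up.
  exact (Hx (fun z => U (z^-1)) (Hi U HU) Up).
Qed.

Lemma solve_mid c1 a c2 : a = c1^-1 * (c1 * a * c2) * c2^-1.
Proof.
  rewrite !gmul_assoc, gmul_Vl, gmul_1l, <- gmul_assoc, gmul_Vr, gmul_1r. reflexivity.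
Qed.

Lemma conj_trivial b u : b^-1 * u * b = e -> u = e.
Proof.
  intro H. rewrite (solve_mid (b^-1) u b).
  assert (Hb : b^-1^-1 = b).
  { rewrite <- (gmul_1r Gr (b^-1^-1)), <- (gmul_Vl Gr b), gmul_assoc, gmul_Vl, gmul_1l. reflexivity. }
  rewrite Hb, H, gmul_1r, gmul_Vr. reflexivity.
Qed.

Lemma precompact_triv tau (S : G -> Prop) :
  hausdorff tau -> (forall z, S z -> z = e) -> precompact tau S.
Proof.
  intros Hh HS. unfold precompact, compact. intros I U HU Hcov.
  assert (Hcl : forall z, closure tau S z -> z = e).
  { intros z Hz. apply NNPP; intro Hne.
    destruct (Hh _ _ Hne) as [V [W [HV [HW [Vz [We Hd]]]]]].
    destruct (Hz V HV Vz) as [w [Vw Sw]]. apply HS in Sw. subst w. exact (Hd _ Vw We). }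
  destruct (classic (closure tau S e)) as [He | He].
  - destruct (Hcov e He) as [i Ui]. exists (i :: nil). intros z Hz.
    exists i. split; [left; reflexivity|]. rewrite (Hcl z Hz). exact Ui.
  - exists nil. intros z Hz. exfalso. apply He. rewrite <- (Hcl z Hz). exact Hz.
Qed.

End Grp.

Theorem theorem5p3 (G : Type) (Gr : GroupOn G) (tau : (G -> Prop) -> Prop) :
  is_topological_group Gr tau -> hausdorff tau -> locally_compact tau ->
  quasi_semi_simple Gr tau ->
  forall tau' : (G -> Prop) -> Prop,
    is_topological_group Gr tau' -> hausdorff tau' ->
    (forall U, tau' U -> tau U) ->
    forall U, tau U <-> tau' U.
Proof.
  intros Htg Hh _ Hqss tau' Htg' Hh' Hsub U.
  split; [|apply Hsub].
  intro HU.
  destruct Hqss as [A [C [_ [_ [HC [Hdec Hnet]]]]]].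
  assert (Hdec' : forall g, exists t : G * G * G, C (fst (fst t)) /\ A (snd (fst t)) /\ C (snd t) /\
            g = gmul Gr (gmul Gr (fst (fst t)) (snd (fst t))) (snd t)).
  { intro g. destruct (Hdec g) as [c1 [a [c2 [? [? [? ?]]]]]]. exists (c1, a, c2). simpl; auto. }
  set (dec := fun g => proj1_sig (constructive_indefinite_description _ (Hdec' g))).
  assert (Hdecs : forall g, C (fst (fst (dec g))) /\ A (snd (fst (dec g))) /\ C (snd (dec g)) /\
            g = gmul Gr (gmul Gr (fst (fst (dec g))) (snd (fst (dec g)))) (snd (dec g))).
  { intro g. exact (proj2_sig (constructive_indefinite_description _ (Hdec' g))). }
  assert (Htop := proj1 Htg). assert (Htop' := proj1 Htg').
  assert (Hloc : forall x, U x -> exists V, tau' V /\ V x /\ forall z, V z -> U z).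
  { intros x Ux. apply NNPP; intro Hno.
    assert (Hy : forall V, tau' V -> V x -> exists y, V y /\ ~ U y).
    { intros V HV Vx. apply NNPP; intro Hn. apply Hno. exists V. split; [|split]; auto.
      intros z Vz. apply NNPP; intro Uz. apply Hn. exists z; auto. }
    destruct Htop' as [HT' [_ HI']].
    set (DT := {V : G -> Prop | tau' V /\ V x}).
    set (Dle := fun V1 V2 : DT => forall z, proj1_sig V2 z -> proj1_sig V1 z).
    assert (Hrefl : forall q, Dle q q) by (intros q z; auto).
    assert (Htrans : forall a b c, Dle a b -> Dle b c -> Dle a c) by (intros a b c H1 H2 z Hz; auto).
    assert (Hdir : forall a b, exists c, Dle a c /\ Dle b c).
    { intros [V1 [HV1 V1x]] [V2 [HV2 V2x]].
      exists (exist _ (fun z => V1 z /\ V2 z) (conj (HI' _ _ HV1 HV2) (conj V1x V2x)) : DT).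
      split; intros z [Hz1 Hz2]; auto. }
    set (D0 := @Build_directed DT Dle Hrefl Htrans Hdir (exist _ (fun _ => True) (conj HT' I))).
    set (y := fun V : D0 => proj1_sig (constructive_indefinite_description _
                 (Hy (proj1_sig V) (proj1 (proj2_sig V)) (proj2 (proj2_sig V))))).
    assert (Hyp : forall V : D0, proj1_sig V (y V) /\ ~ U (y V)).
    { intro V. exact (proj2_sig (constructive_indefinite_description _
                 (Hy (proj1_sig V) (proj1 (proj2_sig V)) (proj2 (proj2_sig V))))). }
    assert (Hyconv : converges tau' y x).
    { intros W HW Wx. exists (exist _ W (conj HW Wx) : DT). intros V HV.
      apply HV. apply Hyp. }
    set (c1 := fun V : D0 => fst (fst (dec (y V)))).
    set (a := fun V : D0 => snd (fst (dec (y V)))).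
    set (c2 := fun V : D0 => snd (dec (y V))).
    assert (Hya : forall V, y V = gmul Gr (gmul Gr (c1 V) (a V)) (c2 V)).
    { intro V. exact (proj2 (proj2 (proj2 (Hdecs (y V))))). }
    assert (Hf1 : forall d : D0, exists d', dle D0 d d' /\ C (c1 d')).
    { intro d. exists d. split; [apply dle_refl | apply (Hdecs (y d))]. }
    destruct (compact_freq_subnet tau C D0 c1 Htop HC Hf1) as [F1 [k1 [l1 [H1s H1c]]]].
    assert (Hf2 : forall d : F1, exists d', dle F1 d d' /\ C (c2 (k1 d'))).
    { intro d. exists d. split; [apply dle_refl | apply (Hdecs (y (k1 d)))]. }
    destruct (compact_freq_subnet tau C F1 (fun f => c2 (k1 f)) Htop HC Hf2) as [F2 [k2 [l2 [H2s H2c]]]].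
    set (h12 := fun f => k1 (k2 f)).
    assert (Hs12 : is_subnet D0 F2 h12) by exact (subnet_comp _ _ _ _ _ H1s H2s).
    assert (Hc1 : converges tau (fun f => c1 (h12 f)) l1) by (exact (conv_subnet _ _ _ _ _ _ H1c H2s)).
    assert (Hc2 : converges tau (fun f => c2 (h12 f)) l2) by exact H2c.
    destruct (classic (to_infinity tau (fun f => a (h12 f)))) as [Hinf | Hninf].
    - destruct (Hnet F2 (fun f => a (h12 f)) (fun i => proj1 (proj2 (Hdecs (y (h12 i))))) Hinf)
        as [E [h [Hs [Hnp _]]]].
      apply Hnp. apply (precompact_triv Gr); auto. intros u Hu.
      set (H := fun b => h12 (h b)).
      assert (Hsub' : is_subnet D0 E H) by exact (subnet_comp _ _ _ _ _ Hs12 Hs).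
      set (b := gmul Gr (gmul Gr (ginv Gr l1) x) (ginv Gr l2)).
      assert (Haconv : converges tau' (fun f => a (H f)) b).
      { apply (conv_ext _ _ (fun f => gmul Gr (gmul Gr (ginv Gr (c1 (H f))) (y (H f))) (ginv Gr (c2 (H f))))).
        { intro f. rewrite Hya. symmetry. apply solve_mid. }
        apply (conv_mul Gr); [exact Htg' | apply (conv_mul Gr); [exact Htg' | |] |].
        - apply (conv_inv Gr); [exact Htg'|]. apply (conv_coarser tau); auto.
          exact (conv_subnet _ _ _ _ _ _ Hc1 Hs).
        - exact (conv_subnet _ _ _ _ _ _ Hyconv Hsub').
        - apply (conv_inv Gr); [exact Htg'|]. apply (conv_coarser tau); auto.
          exact (conv_subnet _ _ _ _ _ _ Hc2 Hs). }
      apply (conj_trivial Gr b).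
      apply (conv_unique tau' E (fun f => gmul Gr (gmul Gr (ginv Gr (a (H f))) u) (a (H f)))); [exact Hh' | | ].
      + apply (conv_mul Gr); [exact Htg' | apply (conv_mul Gr); [exact Htg' | |] | exact Haconv].
        * apply (conv_inv Gr); [exact Htg' | exact Haconv].
        * apply conv_const.
      + apply (conv_coarser tau); auto.
    - assert (HK : exists K, compact tau K /\ forall d, exists d', dle F2 d d' /\ K (a (h12 d'))).
      { apply NNPP; intro HnK. apply Hninf. intros K HK. apply NNPP; intro Hne. apply HnK.
        exists K. split; auto. intro d. apply NNPP; intro Hnd. apply Hne.
        exists d. intros d' Hdd' Ka. apply Hnd. eauto. }
      destruct HK as [K [HK Hfr]].
      destruct (compact_freq_subnet tau K F2 (fun f => a (h12 f)) Htop HK Hfr) as [F3 [k3 [p [H3s H3c]]]].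
      set (H := fun f => h12 (k3 f)).
      assert (Hsub' : is_subnet D0 F3 H) by exact (subnet_comp _ _ _ _ _ Hs12 H3s).
      assert (Hyt : converges tau (fun f => y (H f)) (gmul Gr (gmul Gr l1 p) l2)).
      { apply (conv_ext _ _ (fun f => gmul Gr (gmul Gr (c1 (H f)) (a (H f))) (c2 (H f)))).
        { intro f. symmetry. apply Hya. }
        apply (conv_mul Gr); [exact Htg | apply (conv_mul Gr); [exact Htg | |] |].
        - exact (conv_subnet _ _ _ _ _ _ Hc1 H3s).
        - exact H3c.
        - exact (conv_subnet _ _ _ _ _ _ Hc2 H3s). }
      assert (Heq : gmul Gr (gmul Gr l1 p) l2 = x).
      { apply (conv_unique tau' F3 (fun f => y (H f))); auto.
        - apply (conv_coarser tau); auto.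
        - exact (conv_subnet _ _ _ _ _ _ Hyconv Hsub'). }
      rewrite Heq in Hyt.
      destruct (ev_some _ _ (Hyt U HU Ux)) as [f Hf].
      exact (proj2 (Hyp (H f)) Hf). }
  destruct Htg' as [[_ [Hun _]] _].
  set (I := {V : G -> Prop | tau' V /\ forall z, V z -> U z}).
  replace U with (fun x => exists i : I, proj1_sig i x).
  - apply Hun. intro i. exact (proj1 (proj2_sig i)).
  - apply functional_extensionality; intro x. apply propositional_extensionality. split.
    + intros [i Hi]. exact (proj2 (proj2_sig i) x Hi).
    + intro Ux. destruct (Hloc x Ux) as [V [HV [Vx HVU]]].
      exists (exist _ V (conj HV HVU) : I). exact Vx.
Qed.
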